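(* Let $n$ be a non-negative integer and $r,s\in\mathbb{C}\setminus\mathbb{Z}^{-}$ with $s\ne0$ and $r-s\notin\mathbb{Z}^{-}$. Then \[ \sum_{k=0}^{n}(-1)^{k}\frac{\binom{n}{k}}{\binom{k+r}{s}}H_k=H_n\left(\frac{s}{r-s+1}\frac{1}{\binom{n+r}{r-s+1}}-\frac{1}{\binom{r}{s}}\right)+s\sum_{k=0}^{n-1}\frac{H_{n-1-k}}{(k+s)\binom{r+k+1}{r-s+1}}. \]
   Context: $\mathbb{Z}^{-}$ denotes the set of negative integers. For complex $z$ not a negative integer, $H_z=\psi(z+1)+\gamma$; for integers $n\ge0$, $H_n=\sum_{j=1}^n1/j$. Binomial coefficients with complex entries: $\binom{x}{y}=\frac{\Gamma(x+1)}{\Gamma(y+1)\Gamma(x-y+1)}$. *)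

(* Defs.v *)
From Stdlib Require Import Reals Factorial.
From Coquelicot Require Import Coquelicot.
Open Scope C_scope.

Fixpoint sumC (n : nat) (f : nat -> C) : C :=
  match n with
  | O => 0
  | S m => sumC m f + f m
  end.

Fixpoint prodC (n : nat) (f : nat -> C) : C :=
  match n with
  | O => 1
  | S m => prodC m f * f m
  end.

(* complex power with positive real base: a^z = exp(z ln a), a > 0 *)
Definition Rcpow (a : R) (z : C) : C :=
  (exp (Re z * ln a) * cos (Im z * ln a), exp (Re z * ln a) * sin (Im z * ln a))%R.

(* Euler's Gamma function on C via Gauss' limit formula
   Gamma z = lim_{m -> oo} m! m^z / (z (z+1) ... (z+m)),
   valid for z not in {0,-1,-2,...}. *)
Definition Gauss_seq (z : C) (m : nat) : C :=
  RtoC (INR (fact m)) * Rcpow (INR m) z / prodC (S m) (fun j => z + RtoC (INR j)).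

Definition CGamma (z : C) : C :=
  @lim (CompleteNormedModule.CompleteSpace _ C_CompleteNormedModule)
    (filtermap (Gauss_seq z) eventually).

Definition Cbinom (x y : C) : C :=
  CGamma (x + 1) / (CGamma (y + 1) * CGamma (x - y + 1)).

Definition harm (n : nat) : C := sumC n (fun j => / RtoC (INR (S j))).

Definition is_negint (z : C) : Prop := exists m : nat, z = - RtoC (INR (S m)).

Definition nbinom (n k : nat) : R := Binomial.C n k.

(* Main.v *)
Require Import Defs.
From Stdlib Require Import Reals Lra Lia Psatz Factorial.
From Coquelicot Require Import Coquelicot.
Open Scope R_scope.

Lemma sin_lb1 (a : R) : 0 <= a <= 4 -> a - a^3/6 <= sin a.
Proof. intros H. destruct (pre_sin_bound a 0 (proj1 H) (proj2 H)) as [H1 H2].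
unfold sin_approx, sin_term in *. simpl in *.
replace (1+1+1+1+1+1) with 6 in H1 by ring. lra. Qed.

Lemma cos_lb1 (a : R) : -2 <= a <= 2 -> 1 - a^2/2 <= cos a.
Proof. intros H. destruct (pre_cos_bound a 0 (proj1 H) (proj2 H)) as [H1 H2].
unfold cos_approx, cos_term in *. simpl in *. lra. Qed.

Lemma sin_abs_le_pos (v : R) : 0 <= v -> Rabs (sin v) <= v.
Proof.
  intros Hv. destruct (Req_dec v 0). subst. rewrite sin_0, Rabs_R0. lra.
  pose proof (sin_lt_x v ltac:(lra)). pose proof (SIN_bound v).
  destruct (Rle_dec 1 v). split_Rabs; lra.
  pose proof (sin_lb1 v ltac:(lra)). split_Rabs; nra.
Qed.

Lemma sin_abs_le (v : R) : Rabs (sin v) <= Rabs v.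
Proof.
  destruct (Rle_dec 0 v).
  - rewrite (Rabs_pos_eq v) by lra. now apply sin_abs_le_pos.
  - replace (sin v) with (- sin (-v)) by (rewrite sin_neg; ring).
    rewrite Rabs_Ropp, (Rabs_left v) by lra. apply sin_abs_le_pos; lra.
Qed.

Lemma sin_sub_le (v : R) : Rabs v <= 1 -> Rabs (sin v - v) <= v^2.
Proof.
  intros Hv. destruct (Rle_dec 0 v).
  - rewrite Rabs_left1.
    + pose proof (sin_lb1 v ltac:(split_Rabs; lra)). split_Rabs; nra.
    + destruct (Req_dec v 0). subst; rewrite sin_0; lra.
      pose proof (sin_lt_x v ltac:(lra)); lra.
  - rewrite Rabs_pos_eq.
    + pose proof (sin_lb1 (-v) ltac:(split_Rabs; lra)). rewrite sin_neg in H. split_Rabs; nra.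
    + pose proof (sin_lt_x (-v) ltac:(lra)). rewrite sin_neg in H. lra.
Qed.

Lemma cos_sub_le (v : R) : Rabs v <= 1 -> 0 <= 1 - cos v <= v^2/2.
Proof.
  intros Hv. pose proof (COS_bound v). pose proof (cos_lb1 v ltac:(split_Rabs; lra)). lra.
Qed.

Lemma exp_ge1 (x : R) : 1 + x <= exp x.
Proof. destruct (Req_dec x 0). subst. rewrite exp_0. lra. left. now apply exp_ineq1. Qed.

Lemma exp_small (u : R) : Rabs u <= /2 ->
  0 <= exp u - 1 - u <= 2 * u^2 /\ Rabs (exp u - 1) <= 2 * Rabs u /\ 0 < exp u <= 2.
Proof.
  intros Hu.
  assert (Hl := exp_ge1 u). assert (Hm := exp_ge1 (-u)).
  assert (Hp := exp_pos u).
  assert (E : exp (-u) * exp u = 1) by (rewrite <- exp_plus; replace (-u+u) with 0 by ring; apply exp_0).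
  assert (Hup : exp u * (1 - u) <= 1) by nra.
  assert (Hu' : -/2 <= u <= /2) by (split_Rabs; lra).
  assert (exp u <= 2) by nra.
  split; [|split].
  - split. lra. nra.
  - split_Rabs; nra.
  - lra.
Qed.

Open Scope C_scope.

Definition cexp (w : C) : C := (exp (fst w) * cos (snd w), exp (fst w) * sin (snd w))%R.

Lemma Cmod_le_abs (x : C) : (Cmod x <= Rabs (fst x) + Rabs (snd x))%R.
Proof.
  pose proof (Cmod2_alt x). pose proof (Cmod_ge_0 x). unfold Re, Im in H.
  assert (Cmod x ^ 2 <= (Rabs (fst x) + Rabs (snd x))^2)%R.
  { rewrite H. pose proof (Rabs_pos (fst x)). pose proof (Rabs_pos (snd x)).
    rewrite <- (pow2_abs (fst x)), <- (pow2_abs (snd x)). nra. }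
  pose proof (Rabs_pos (fst x)). pose proof (Rabs_pos (snd x)). nra.
Qed.

Lemma cexp_bound (w : C) : (Rabs (fst w) <= /2)%R -> (Rabs (snd w) <= 1)%R ->
  (Cmod (cexp w - 1 - w) <= 3 * (Rabs (fst w) + Rabs (snd w))^2)%R.
Proof.
  destruct w as [u v]. simpl. intros Hu Hv.
  eapply Rle_trans. apply Cmod_le_abs. simpl.
  destruct (exp_small u Hu) as [E1 [E2 E3]].
  pose proof (cos_sub_le v Hv). pose proof (sin_sub_le v Hv).
  pose proof (sin_abs_le v).
  replace (exp u * cos v + - (1) + - u)%R with ((exp u - 1 - u) - exp u * (1 - cos v))%R by ring.
  replace (exp u * sin v + - 0 + - v)%R with ((exp u - 1) * sin v + (sin v - v))%R by ring.
  assert (A1 : (Rabs ((exp u - 1 - u) - exp u * (1 - cos v)) <= 2 * u^2 + v^2)%R).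
  { assert (0 <= exp u * (1 - cos v) <= v^2)%R by nra. split_Rabs; nra. }
  assert (A2 : (Rabs ((exp u - 1) * sin v + (sin v - v)) <= 2 * Rabs u * Rabs v + v^2)%R).
  { eapply Rle_trans. apply Rabs_triang. rewrite Rabs_mult.
    pose proof (Rabs_pos (exp u - 1)). pose proof (Rabs_pos (sin v)). pose proof (Rabs_pos u). nra. }
  pose proof (Rabs_pos u). pose proof (Rabs_pos v).
  rewrite <- (pow2_abs u), <- (pow2_abs v) in *. simpl. nra.
Qed.

Lemma ln_le_sub (y : R) : (-1 < y)%R -> (ln (1 + y) <= y)%R.
Proof.
  intros H. rewrite <- (ln_exp y) at 2. apply ln_le. lra. apply exp_ge1.
Qed.

Definition Lm (m : nat) : R := (ln (INR (S m)) - ln (INR m))%R.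

Lemma Lm_bounds (m : nat) : (1 <= m)%nat -> (/ INR (S m) <= Lm m <= / INR m)%R.
Proof.
  intros Hm. unfold Lm. assert (Hm' : (1 <= INR m)%R) by (apply (le_INR 1); lia).
  rewrite S_INR. split.
  - assert (E : (ln (INR m) - ln (INR m + 1) = ln (1 + (- / (INR m + 1))))%R).
    { rewrite <- ln_div by lra. f_equal. field. lra. }
    pose proof (ln_le_sub (- / (INR m + 1))).
    assert (0 < / (INR m + 1) < 1)%R.
    { split. apply Rinv_0_lt_compat; lra. rewrite <- Rinv_1. apply Rinv_lt_contravar; lra. }
    lra.
  - assert (E : (ln (INR m + 1) - ln (INR m) = ln (1 + / INR m))%R).
    { rewrite <- ln_div by lra. f_equal. field. lra. }
    rewrite E. apply ln_le_sub. assert (0 < / INR m)%R by (apply Rinv_0_lt_compat; lra). lra.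
Qed.

Lemma Cinv_0 : / (0 : C) = 0.
Proof. apply injective_projections; unfold Cinv; simpl; unfold Rdiv; ring. Qed.

Lemma Cinv_mult_gen (x y : C) : / (x * y) = / x * / y.
Proof.
  destruct (Ceq_dec x 0) as [->|Hx]. rewrite Cmult_0_l, Cinv_0. ring.
  destruct (Ceq_dec y 0) as [->|Hy]. rewrite Cmult_0_r, Cinv_0. ring.
  field. split; auto.
Qed.

Lemma Cinv_div_gen (x y : C) : / (x / y) = y / x.
Proof.
  unfold Cdiv. rewrite Cinv_mult_gen.
  destruct (Ceq_dec y 0) as [->|Hy]. rewrite Cinv_0, Cinv_0. ring.
  replace (/ / y) with y by (field; auto). ring.
Qed.

Lemma cexp_add (p q : C) : cexp (p + q) = cexp p * cexp q.
Proof.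
  destruct p as [p1 p2], q as [q1 q2]. unfold cexp. simpl.
  rewrite exp_plus, cos_plus, sin_plus.
  apply injective_projections; simpl; ring.
Qed.

Lemma Rcpow_S (m : nat) (z : C) :
  Rcpow (INR (S m)) z = Rcpow (INR m) z * cexp (Re z * Lm m, Im z * Lm m)%R.
Proof.
  assert (E : forall a, Rcpow a z = cexp (Re z * ln a, Im z * ln a)%R) by reflexivity.
  rewrite !E, <- cexp_add. f_equal. unfold Lm.
  apply injective_projections; simpl; ring.
Qed.

Lemma Gauss_rec (z : C) (m : nat) :
  Gauss_seq z (S m) = Gauss_seq z m *
    (RtoC (INR (S m)) * cexp (Re z * Lm m, Im z * Lm m)%R / (z + RtoC (INR (S m)))).
Proof.
  unfold Gauss_seq. rewrite Rcpow_S.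
  change (prodC (S (S m)) (fun j : nat => z + RtoC (INR j)))
    with (prodC (S m) (fun j : nat => z + RtoC (INR j)) * (z + RtoC (INR (S m)))).
  change (fact (S m)) with (S m * fact m)%nat. rewrite mult_INR, RtoC_mult.
  unfold Cdiv. rewrite Cinv_mult_gen. ring.
Qed.

Definition rho (z : C) (m : nat) : C :=
  RtoC (INR (S m)) * cexp (Re z * Lm m, Im z * Lm m)%R / (z + RtoC (INR (S m))).

Lemma Cmod_z_le (z : C) : (Cmod z <= Rabs (Re z) + Rabs (Im z))%R.
Proof. apply Cmod_le_abs. Qed.

Lemma ratio_bound (z : C) : exists (M : nat) (K : R), (1 <= M)%nat /\ (0 <= K)%R /\
  forall m, (M <= m)%nat -> (Cmod (rho z m - 1) <= K / (INR m)^2)%R.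
Proof.
  set (A := (Rabs (Re z) + Rabs (Im z))%R).
  assert (HA : (0 <= A)%R) by (unfold A; pose proof (Rabs_pos (Re z)); pose proof (Rabs_pos (Im z)); lra).
  destruct (INR_unbounded (2 * A + 2)) as [M HM].
  exists M, (12 * A^2 + 2 * A)%R.
  assert (HM1 : (1 <= M)%nat).
  { destruct M. simpl in HM. lra. lia. }
  split; [exact HM1|]. split; [nra|].
  intros m Hm.
  assert (HmM : (INR M <= INR m)%R) by (apply le_INR; lia).
  set (mR := INR m) in *.
  assert (HmA : (2 * A + 2 < mR)%R) by lra.
  destruct (Lm_bounds m ltac:(lia)) as [L1 L2].
  set (L := Lm m) in *. rewrite S_INR in L1. fold mR in L1, L2.
  assert (Hpos : (0 < mR)%R) by lra.
  assert (HL0 : (0 < L)%R). { eapply Rlt_le_trans; [|exact L1]. apply Rinv_0_lt_compat. lra. }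
  assert (HmL : (mR * L <= 1)%R).
  { apply (Rmult_le_compat_l mR) in L2; [|lra]. rewrite Rinv_r in L2 by lra. exact L2. }
  assert (HmL' : (1 <= (mR + 1) * L)%R).
  { apply (Rmult_le_compat_l (mR+1)) in L1; [|lra]. rewrite Rinv_r in L1 by lra. exact L1. }
  set (w := (Re z * L, Im z * L)%R : C).
  assert (Hw : w = z * RtoC L).
  { unfold w. destruct z as [x y]. apply injective_projections; simpl; ring. }
  assert (Hu : (Rabs (fst w) <= / 2)%R).
  { simpl. rewrite Rabs_mult, (Rabs_pos_eq L) by lra.
    assert (Rabs (Re z) <= A)%R by (unfold A; pose proof (Rabs_pos (Im z)); lra).
    pose proof (Rabs_pos (Re z)). assert (Rabs (Re z) * L * mR <= A)%R by nra.
    apply (Rmult_le_reg_r mR); [lra|]. nra. }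
  assert (Hv : (Rabs (snd w) <= 1)%R).
  { simpl. rewrite Rabs_mult, (Rabs_pos_eq L) by lra.
    assert (Rabs (Im z) <= A)%R by (unfold A; pose proof (Rabs_pos (Re z)); lra).
    pose proof (Rabs_pos (Im z)). assert (Rabs (Im z) * L * mR <= A)%R by nra.
    apply (Rmult_le_reg_r mR); [lra|]. nra. }
  pose proof (cexp_bound w Hu Hv) as HE.
  assert (HE' : (Cmod (cexp w - 1 - w) <= 3 * A^2 * L^2)%R).
  { eapply Rle_trans; [exact HE|]. unfold w; simpl fst; simpl snd.
    rewrite !Rabs_mult, (Rabs_pos_eq L) by lra. fold A. right. unfold A. ring. }
  set (E := cexp w - 1 - w) in *.
  set (D := z + RtoC (INR (S m))).
  assert (HD : (mR / 2 <= Cmod D)%R).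
  { pose proof (Cmod_triangle D (- z)). 
    replace (D + - z) with (RtoC (mR + 1)) in H by (unfold D, mR; rewrite S_INR, RtoC_plus; ring).
    rewrite Cmod_R, Rabs_pos_eq in H by lra. rewrite Cmod_opp in H.
    pose proof (Cmod_z_le z). fold A in H0. lra. }
  assert (HD0 : D <> 0).
  { intro H0. rewrite H0, Cmod_0 in HD. lra. }
  assert (Hid : rho z m - 1 = (RtoC (mR + 1) * E + z * RtoC ((mR + 1) * L - 1)) / D).
  { unfold rho. change (cexp (Re z * Lm m, Im z * Lm m)%R) with (cexp w). fold D.
    unfold E. set (c := cexp w). rewrite Hw.
    assert (ED : D = z + (RtoC mR + 1)) by (unfold D, mR; rewrite S_INR, RtoC_plus; reflexivity).
    rewrite ED in HD0 |- *.
    replace (RtoC (INR (S m))) with (RtoC mR + 1) by (unfold mR; rewrite S_INR, RtoC_plus; reflexivity).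
    rewrite RtoC_minus, RtoC_mult, RtoC_plus.
    field. exact HD0. }
  rewrite Hid, Cmod_div by exact HD0.
  assert (HN : (Cmod (RtoC (mR + 1) * E + z * RtoC ((mR + 1) * L - 1))
               <= (mR + 1) * (3 * A^2 * L^2) + A * ((mR + 1) * L - 1))%R).
  { eapply Rle_trans. apply Cmod_triangle. rewrite !Cmod_mult, !Cmod_R.
    rewrite (Rabs_pos_eq (mR + 1)) by lra. rewrite (Rabs_pos_eq ((mR + 1) * L - 1)) by lra.
    pose proof (Cmod_z_le z). fold A in H. pose proof (Cmod_ge_0 E).
    apply Rplus_le_compat. apply Rmult_le_compat_l; lra. apply Rmult_le_compat_r; lra. }
  set (N := Cmod (RtoC (mR + 1) * E + z * RtoC ((mR + 1) * L - 1))) in *.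
  assert (HDp : (0 < Cmod D)%R) by lra.
  unfold Rdiv. apply (Rmult_le_reg_r (Cmod D * mR^2)). nra.
  replace (N * / Cmod D * (Cmod D * mR ^ 2))%R with (N * mR^2)%R by (field; lra).
  replace ((12 * A ^ 2 + 2 * A) * / mR ^ 2 * (Cmod D * mR ^ 2))%R with ((12 * A ^ 2 + 2 * A) * Cmod D)%R by (field; lra).
  assert (H1 : ((mR + 1) * (3 * A^2 * L^2) * mR^2 <= 6 * A^2 * mR)%R).
  { assert (0 <= mR * L)%R by nra.
    assert ((mR * L)^2 <= 1)%R by nra.
    replace ((mR + 1) * (3 * A^2 * L^2) * mR^2)%R with (3 * A^2 * (mR+1) * (mR * L)^2)%R by ring.
    assert (0 <= 3 * A^2 * (mR + 1))%R by nra. nra. }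
  assert (H2 : (A * ((mR + 1) * L - 1) * mR^2 <= A * mR)%R).
  { assert (((mR + 1) * L - 1) * mR <= 1)%R by nra.
    assert (0 <= A * mR)%R by nra. nra. }
  assert (H3 : (N * mR^2 <= 6 * A^2 * mR + A * mR)%R).
  { assert (0 <= mR^2)%R by nra.
    apply Rmult_le_compat_r with (r := (mR^2)%R) in HN; lra. }
  assert (H4 : ((12 * A ^ 2 + 2 * A) * (mR / 2) <= (12 * A ^ 2 + 2 * A) * Cmod D)%R).
  { apply Rmult_le_compat_l; nra. }
  lra.
Qed.

Lemma real_ineq1 (K m : R) : (0 <= K)%R -> (1 <= m)%R ->
  (K / m^2 + 2 * K / (m + 1) <= 2 * K / m)%R.
Proof.
  intros HK Hm.
  assert (E : (2 * K / m - (K / m^2 + 2 * K / (m + 1)) = K * (m - 1) / (m^2 * (m + 1)))%R)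
    by (field; lra).
  assert (0 <= K * (m - 1) / (m^2 * (m + 1)))%R.
  { apply Rmult_le_pos. nra. left. apply Rinv_0_lt_compat. nra. }
  lra.
Qed.

Lemma real_ineq2 (m : R) : (1 <= m)%R -> (/ m^2 <= 2 * (/ m - / (m + 1)))%R.
Proof.
  intros Hm.
  assert (E : (2 * (/ m - / (m + 1)) - / m^2 = (m - 1) / (m^2 * (m + 1)))%R) by (field; lra).
  assert (0 <= (m - 1) / (m^2 * (m + 1)))%R.
  { apply Rmult_le_pos. nra. left. apply Rinv_0_lt_compat. nra. }
  lra.
Qed.

Lemma gen_bound (g rh : nat -> C) (M : nat) (K : R) :
  (1 <= M)%nat -> (0 <= K)%R -> (forall m, g (S m) = g m * rh m) ->
  (forall m, (M <= m)%nat -> (Cmod (rh m - 1) <= K / (INR m)^2)%R) ->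
  exists B, (0 <= B)%R /\ (forall m, (M <= m)%nat -> (Cmod (g m) <= B)%R) /\
    (forall m d, (M <= m)%nat -> (Cmod (g (m + d)%nat - g m) <= 2 * B * K * (/ INR m - / INR (m + d)))%R).
Proof.
  intros HM HK Hrec Hb.
  assert (Hstep : forall m, (M <= m)%nat -> (Cmod (g (S m)) <= Cmod (g m) * (1 + K / (INR m)^2))%R).
  { intros m Hm. rewrite Hrec, Cmod_mult. apply Rmult_le_compat_l. apply Cmod_ge_0.
    replace (rh m) with (1 + (rh m - 1)) by ring.
    eapply Rle_trans. apply Cmod_triangle. rewrite Cmod_1. specialize (Hb m Hm). lra. }
  assert (Hmono : forall d, (Cmod (g (M + d)%nat) * exp (2 * K / INR (M + d)) <=
                             Cmod (g M) * exp (2 * K / INR M))%R).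
  { induction d.
    - rewrite Nat.add_0_r. lra.
    - rewrite Nat.add_succ_r. eapply Rle_trans; [|exact IHd].
      set (m := (M + d)%nat) in *.
      assert (Hm1 : (1 <= INR m)%R) by (apply (le_INR 1); unfold m; lia).
      rewrite S_INR.
      pose proof (Hstep m ltac:(unfold m; lia)).
      assert (HKm : (0 <= K / INR m ^ 2)%R) by (apply Rmult_le_pos; [lra| left; apply Rinv_0_lt_compat; nra]).
      assert (H1 : (1 + K / INR m ^2 <= exp (K / INR m ^ 2))%R) by apply exp_ge1.
      assert (H2 : (exp (K / INR m ^ 2) * exp (2 * K / (INR m + 1)) <= exp (2 * K / INR m))%R).
      { rewrite <- exp_plus. 
        destruct (Req_dec (K / INR m ^ 2 + 2 * K / (INR m + 1)) (2 * K / INR m)) as [E|E].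
        rewrite E; lra. left. apply exp_increasing. pose proof (real_ineq1 K (INR m) HK Hm1). lra. }
      pose proof (exp_pos (2 * K / (INR m + 1))).
      pose proof (Cmod_ge_0 (g m)). pose proof (Cmod_ge_0 (g (S m))).
      apply Rle_trans with (Cmod (g m) * (1 + K / INR m ^ 2) * exp (2 * K / (INR m + 1)))%R.
      apply Rmult_le_compat_r; lra.
      rewrite Rmult_assoc. apply Rmult_le_compat_l. lra.
      apply Rle_trans with (exp (K / INR m ^ 2) * exp (2 * K / (INR m + 1)))%R; [|exact H2].
      apply Rmult_le_compat_r; lra. }
  set (B := (Cmod (g M) * exp (2 * K / INR M))%R).
  assert (HB : forall m, (M <= m)%nat -> (Cmod (g m) <= B)%R).
  { intros m Hm. replace m with (M + (m - M))%nat by lia.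
    eapply Rle_trans; [|apply (Hmono (m - M)%nat)].
    set (m' := (M + (m - M))%nat).
    assert (Hm1 : (1 <= INR m')%R) by (apply (le_INR 1); unfold m'; lia).
    assert (0 <= 2 * K / INR m')%R by (apply Rmult_le_pos; [lra| left; apply Rinv_0_lt_compat; lra]).
    pose proof (exp_ge1 (2 * K / INR m')). pose proof (Cmod_ge_0 (g m')). nra. }
  exists B. split; [|split; [exact HB|]].
  - unfold B. pose proof (Cmod_ge_0 (g M)). pose proof (exp_pos (2 * K / INR M)). nra.
  - intros m d Hm. induction d.
    + rewrite Nat.add_0_r. replace (g m - g m) with (RtoC 0) by ring. rewrite Cmod_0. lra.
    + rewrite Nat.add_succ_r.
      replace (g (S (m + d)) - g m) with ((g (S (m + d)) - g (m + d)%nat) + (g (m + d)%nat - g m)) by ring.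
      eapply Rle_trans. apply Cmod_triangle.
      set (j := (m + d)%nat) in *.
      assert (Hj1 : (1 <= INR j)%R) by (apply (le_INR 1); unfold j; lia).
      assert (E1 : (Cmod (g (S j) - g j) <= B * (K / INR j ^ 2))%R).
      { rewrite Hrec. replace (g j * rh j - g j) with (g j * (rh j - 1)) by ring.
        rewrite Cmod_mult. apply Rmult_le_compat. apply Cmod_ge_0. apply Cmod_ge_0.
        apply HB; unfold j; lia. apply Hb; unfold j; lia. }
      pose proof (real_ineq2 (INR j) Hj1). rewrite S_INR.
      assert (0 <= B)%R by (unfold B; pose proof (Cmod_ge_0 (g M)); pose proof (exp_pos (2 * K / INR M)); nra).
      assert (B * (K / INR j ^ 2) <= 2 * B * K * (/ INR j - / (INR j + 1)))%R.
      { unfold Rdiv. replace (B * (K * / INR j ^ 2))%R with ((B * K) * / INR j ^ 2)%R by ring.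
        replace (2 * B * K * (/ INR j - / (INR j + 1)))%R with ((B * K) * (2 * (/ INR j - / (INR j + 1))))%R by ring.
        apply Rmult_le_compat_l. nra. exact H. }
      lra.
Qed.

Lemma Gauss_cauchy (z : C) : forall eps : R, (0 < eps)%R ->
  exists N : nat, forall p, (N <= p)%nat -> (Cmod (Gauss_seq z p - Gauss_seq z N) < eps)%R.
Proof.
  intros eps Heps.
  destruct (ratio_bound z) as [M [K [HM [HK Hb]]]].
  destruct (gen_bound (Gauss_seq z) (rho z) M K HM HK (Gauss_rec z) Hb) as [B [HB0 [HB HC]]].
  destruct (INR_unbounded (2 * B * K / eps)) as [n0 Hn0].
  exists (M + n0)%nat. intros p Hp.
  replace p with ((M + n0) + (p - (M + n0)))%nat by lia.
  eapply Rle_lt_trans. apply HC. lia.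
  set (N := (M + n0)%nat). set (q := (N + (p - N))%nat).
  assert (HN : (INR n0 <= INR N)%R) by (apply le_INR; unfold N; lia).
  assert (HN1 : (1 <= INR N)%R) by (apply (le_INR 1); unfold N; lia).
  assert (Hq : (INR N <= INR q)%R) by (apply le_INR; unfold q; lia).
  assert (0 < / INR q)%R by (apply Rinv_0_lt_compat; lra).
  assert (0 <= 2 * B * K)%R by nra.
  assert (2 * B * K * (/ INR N - / INR q) <= 2 * B * K * / INR N)%R by nra.
  assert (2 * B * K * / INR N < eps)%R.
  { apply (Rmult_lt_reg_r (INR N)). lra. rewrite Rmult_assoc, Rinv_l by lra.
    assert (2 * B * K < eps * INR n0)%R.
    { apply (Rmult_lt_compat_r eps) in Hn0; [|lra]. unfold Rdiv in Hn0.
      rewrite Rmult_assoc, Rinv_l in Hn0 by lra. lra. }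
    nra. }
  lra.
Qed.

Lemma Gauss_lim (z : C) : forall eps : R, (0 < eps)%R ->
  exists N : nat, forall m, (N <= m)%nat -> (Cmod (Gauss_seq z m - CGamma z) < eps)%R.
Proof.
  intros eps Heps.
  set (F := filtermap (Gauss_seq z) eventually).
  assert (PF : ProperFilter F).
  { apply filtermap_proper_filter. apply eventually_filter. }
  assert (CF : @cauchy (CompleteNormedModule.CompleteSpace _ C_CompleteNormedModule) F).
  { intros e. destruct (Gauss_cauchy z e (cond_pos e)) as [N HN].
    exists (Gauss_seq z N). exists N. intros m Hm.
    apply (norm_compat1 (V := C_NormedModule)). apply HN. exact Hm. }
  assert (Hs : (0 < sqrt 2)%R) by (apply sqrt_lt_R0; lra).
  assert (He : (0 < eps / sqrt 2)%R) by (apply Rdiv_lt_0_compat; lra).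
  pose proof (@complete_cauchy (CompleteNormedModule.CompleteSpace _ C_CompleteNormedModule) F PF CF (mkposreal _ He)) as H.
  destruct H as [N HN]. exists N. intros m Hm.
  specialize (HN m Hm).
  pose proof (norm_compat2 (V := C_NormedModule) _ _ _ HN) as H2.
  simpl in H2. unfold CGamma.
  replace eps with (sqrt 2 * (eps / sqrt 2))%R by (field; lra).
  exact H2.
Qed.

Definition nonpole (z : C) : Prop := forall m : nat, z + RtoC (INR m) <> 0.

Lemma Cmult_neq0 (x y : C) : x <> 0 -> y <> 0 -> x * y <> 0.
Proof.
  intros Hx Hy H. apply Hy. replace y with (/ x * (x * y)) by (field; auto). rewrite H. ring.
Qed.

Lemma prodC_nonzero (n : nat) (f : nat -> C) : (forall k, (k < n)%nat -> f k <> 0) -> prodC n f <> 0.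
Proof.
  induction n; intros H; simpl.
  - exact C1_nz.
  - apply Cmult_neq0. apply IHn. intros; apply H; lia. apply H; lia.
Qed.

Lemma prodC_first (n : nat) (f : nat -> C) : prodC (S n) f = f O * prodC n (fun j => f (S j)).
Proof.
  induction n. simpl. ring.
  change (prodC (S (S n)) f) with (prodC (S n) f * f (S n)). rewrite IHn. simpl. ring.
Qed.

Lemma prodC_ext (n : nat) (f g : nat -> C) : (forall k, (k < n)%nat -> f k = g k) -> prodC n f = prodC n g.
Proof.
  induction n; intros H; simpl. reflexivity. rewrite IHn by (intros; apply H; lia). rewrite H by lia. reflexivity.
Qed.

Lemma RtoC_INR_S (k : nat) : RtoC (INR (S k)) = RtoC (INR k) + 1.
Proof. rewrite S_INR, RtoC_plus. reflexivity. Qed.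

Lemma Rcpow_plus1 (a : R) (z : C) : (0 < a)%R -> Rcpow a (z + 1) = RtoC a * Rcpow a z.
Proof.
  intros Ha. destruct z as [x y]. unfold Rcpow. simpl.
  replace ((x + 1) * ln a)%R with (x * ln a + ln a)%R by ring.
  replace ((y + 0) * ln a)%R with (y * ln a)%R by ring.
  rewrite exp_plus, exp_ln by exact Ha.
  apply injective_projections; simpl; ring.
Qed.

Lemma Gauss_succ (z : C) (m : nat) : nonpole z -> (1 <= m)%nat ->
  Gauss_seq (z + 1) m = z * Gauss_seq z m * RtoC (INR m) / (z + RtoC (INR m) + 1).
Proof.
  intros Hz Hm. unfold Gauss_seq.
  assert (Hm0 : (0 < INR m)%R) by (apply lt_0_INR; lia).
  rewrite Rcpow_plus1 by exact Hm0.
  set (P := prodC (S m) (fun j => z + RtoC (INR j))).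
  set (Q := prodC (S m) (fun j => z + 1 + RtoC (INR j))).
  assert (HPQ : P * (z + RtoC (INR m) + 1) = z * Q).
  { unfold P, Q. rewrite <- Cplus_assoc, <- RtoC_INR_S.
    change (prodC (S m) (fun j : nat => z + RtoC (INR j)) * (z + RtoC (INR (S m))))
      with (prodC (S (S m)) (fun j : nat => z + RtoC (INR j))).
    rewrite prodC_first. change (INR 0) with 0%R. rewrite Cplus_0_r. f_equal.
    apply prodC_ext. intros k _. rewrite RtoC_INR_S. ring. }
  assert (HQ : Q <> 0).
  { unfold Q. apply prodC_nonzero. intros k _.
    replace (z + 1 + RtoC (INR k)) with (z + RtoC (INR (S k))) by (rewrite RtoC_INR_S; ring). apply Hz. }
  assert (HP : P <> 0).
  { unfold P. apply prodC_nonzero. intros k _. apply Hz. }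
  assert (Hz0 : z <> 0). { intro E. apply (Hz O). simpl. rewrite E. ring. }
  assert (Hz1 : z + RtoC (INR m) + 1 <> 0).
  { replace (z + RtoC (INR m) + 1) with (z + RtoC (INR (S m))) by (rewrite RtoC_INR_S; ring). apply Hz. }
  assert (EQ : Q = P * (z + RtoC (INR m) + 1) / z) by (rewrite HPQ; field; auto).
  rewrite EQ. field. repeat split; auto.
Qed.

Lemma Cmod_small_eq (x : C) : (forall eps : R, (0 < eps)%R -> (Cmod x < eps)%R) -> x = 0.
Proof.
  intros H. destruct (Ceq_dec x 0) as [E|E]; auto.
  apply Cmod_gt_0 in E. specialize (H _ E). lra.
Qed.

Lemma Gamma_succ (z : C) : nonpole z -> CGamma (z + 1) = z * CGamma z.
Proof.
  intros Hz.
  cut (CGamma (z + 1) - z * CGamma z = 0).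
  { intro H. replace (CGamma (z + 1)) with (CGamma (z + 1) - z * CGamma z + z * CGamma z) by ring.
    rewrite H. ring. }
  apply Cmod_small_eq. intros eps Heps.
  set (L0 := CGamma z). set (L1 := CGamma (z + 1)).
  set (cz := Cmod z).
  assert (Hcz : (0 <= cz)%R) by apply Cmod_ge_0.
  set (e := (eps / (3 * (cz + 1)))%R).
  assert (He : (0 < e)%R) by (unfold e; apply Rdiv_lt_0_compat; lra).
  destruct (Gauss_lim z 1 Rlt_0_1) as [N0 HN0].
  destruct (Gauss_lim z e He) as [N1 HN1].
  destruct (Gauss_lim (z + 1) e He) as [N2 HN2].
  set (B := (Cmod L0 + 1)%R).
  assert (HB0 : (0 < B)%R) by (unfold B; pose proof (Cmod_ge_0 L0); lra).
  set (c1 := (cz * Cmod (z + 1) * B)%R).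
  assert (Hc1 : (0 <= c1)%R) by (unfold c1; pose proof (Cmod_ge_0 (z+1)); apply Rmult_le_pos; [apply Rmult_le_pos|]; lra).
  destruct (INR_unbounded (cz + 3 * c1 / eps + 1)) as [N3 HN3].
  set (m := (N0 + N1 + N2 + N3 + 1)%nat).
  assert (Hm3 : (INR N3 <= INR m)%R) by (apply le_INR; unfold m; lia).
  specialize (HN0 m ltac:(unfold m; lia)). specialize (HN1 m ltac:(unfold m; lia)).
  specialize (HN2 m ltac:(unfold m; lia)).
  rewrite (Gauss_succ z m Hz ltac:(unfold m; lia)) in HN2.
  set (g := Gauss_seq z m) in *.
  set (mR := INR m) in *.
  change (CGamma z) with L0 in HN0, HN1. change (CGamma (z + 1)) with L1 in HN2.
  assert (Hg : (Cmod g <= B)%R).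
  { replace g with ((g - L0) + L0) by ring. eapply Rle_trans. apply Cmod_triangle. unfold B. lra. }
  assert (HD : (mR + 1 - cz <= Cmod (z + RtoC mR + 1))%R).
  { pose proof (Cmod_triangle (z + RtoC mR + 1) (- z)).
    replace (z + RtoC mR + 1 + - z) with (RtoC (mR + 1)) in H by (rewrite RtoC_plus; ring).
    rewrite Cmod_R, Rabs_pos_eq in H. rewrite Cmod_opp in H. fold cz in H. lra.
    pose proof (pos_INR m). unfold mR. lra. }
  assert (HDp : (3 * c1 / eps < mR + 1 - cz)%R) by lra.
  assert (HDp' : (0 < mR + 1 - cz)%R).
  { assert (0 <= 3 * c1 / eps)%R by (apply Rmult_le_pos; [lra|left; apply Rinv_0_lt_compat; lra]). lra. }
  assert (HD0 : z + RtoC mR + 1 <> 0).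
  { intro E. rewrite E, Cmod_0 in HD. lra. }
  set (D := z + RtoC mR + 1) in *.
  assert (Hdiff : z * g * RtoC mR / D - z * g = - (z * (z + 1) * g) / D).
  { unfold D in *. field. exact HD0. }
  assert (Hdb : (Cmod (- (z * (z + 1) * g) / D) < eps / 3)%R).
  { rewrite Cmod_div by exact HD0. rewrite Cmod_opp, !Cmod_mult. fold cz.
    apply (Rmult_lt_reg_r (Cmod D)). lra. unfold Rdiv. rewrite Rmult_assoc, Rinv_l by lra.
    rewrite Rmult_1_r.
    apply Rle_lt_trans with c1.
    { unfold c1. apply Rmult_le_compat_l. apply Rmult_le_pos. lra. apply Cmod_ge_0. exact Hg. }
    apply Rlt_le_trans with (eps * / 3 * (mR + 1 - cz))%R; [|apply Rmult_le_compat_l; lra].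
    apply (Rmult_lt_compat_l (eps / 3)) in HDp; [|lra].
    replace (eps / 3 * (3 * c1 / eps))%R with c1 in HDp by (field; lra). unfold Rdiv in HDp. lra. }
  replace (L1 - z * L0) with ((L1 - z * g * RtoC mR / D) + (z * g * RtoC mR / D - z * g) + z * (g - L0)) by ring.
  rewrite Hdiff.
  eapply Rle_lt_trans. apply Cmod_triangle.
  eapply Rle_lt_trans. apply Rplus_le_compat_r. apply Cmod_triangle.
  assert (T1 : (Cmod (L1 - z * g * RtoC mR / D) < e)%R).
  { replace (L1 - z * g * RtoC mR / D) with (- (z * g * RtoC mR / D - L1)) by ring.
    rewrite Cmod_opp. exact HN2. }
  assert (T3 : (Cmod (z * (g - L0)) <= cz * e)%R).
  { rewrite Cmod_mult. fold cz. apply Rmult_le_compat_l. lra. left; exact HN1. }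
  assert (Ee : (e + cz * e = eps / 3)%R) by (unfold e; field; lra).
  lra.
Qed.

Definition poch (z : C) (k : nat) : C := prodC k (fun i => z + RtoC (INR i)).

Lemma nonpole_shift (z : C) (k : nat) : nonpole z -> nonpole (z + RtoC (INR k)).
Proof.
  intros Hz m. rewrite <- Cplus_assoc, <- RtoC_plus, <- plus_INR. apply Hz.
Qed.

Lemma Gamma_shift (z : C) (k : nat) : nonpole z -> CGamma (z + RtoC (INR k)) = poch z k * CGamma z.
Proof.
  intros Hz. induction k.
  - change (INR 0) with 0%R. rewrite Cplus_0_r. unfold poch. simpl. ring.
  - replace (z + RtoC (INR (S k))) with ((z + RtoC (INR k)) + 1) by (rewrite RtoC_INR_S; ring).
    rewrite Gamma_succ by (apply nonpole_shift; exact Hz).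
    rewrite IHk. unfold poch. simpl. ring.
Qed.

Open Scope C_scope.

Fixpoint bin (n k : nat) : nat :=
  match n, k with
  | _, O => 1%nat
  | O, S _ => 0%nat
  | S n', S k' => (bin n' k' + bin n' (S k'))%nat
  end.

Lemma bin_gt (n k : nat) : (n < k)%nat -> bin n k = 0%nat.
Proof.
  revert k. induction n; intros k H; destruct k; simpl; try lia; auto.
  rewrite !IHn by lia. reflexivity.
Qed.

Lemma bin_nn (n : nat) : bin n n = 1%nat.
Proof. induction n; simpl; auto. rewrite IHn, bin_gt by lia. reflexivity. Qed.

Lemma Cn0 (n : nat) : Binomial.C n 0 = 1%R.
Proof. unfold Binomial.C. rewrite Nat.sub_0_r. simpl. field. apply INR_fact_neq_0. Qed.

Lemma Cnn (n : nat) : Binomial.C n n = 1%R.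
Proof. unfold Binomial.C. rewrite Nat.sub_diag. simpl. field. apply INR_fact_neq_0. Qed.

Lemma nbinom_bin (n k : nat) : (k <= n)%nat -> nbinom n k = INR (bin n k).
Proof.
  unfold nbinom. revert k. induction n; intros k Hk.
  - destruct k; [|lia]. simpl. rewrite Cn0. reflexivity.
  - destruct k. rewrite Cn0. reflexivity.
    destruct (Nat.eq_dec k n) as [->|Hne].
    + rewrite Cnn, bin_nn. reflexivity.
    + rewrite <- Binomial.pascal by lia. simpl. rewrite plus_INR, !IHn by lia. reflexivity.
Qed.

Lemma bin_absorb (n k : nat) : (S k * bin (S n) (S k) = S n * bin n k)%nat.
Proof.
  revert k. induction n; intros k.
  - destruct k; simpl. reflexivity. lia.
  - destruct k.
    + change (bin (S (S n)) 1) with (bin (S n) 0 + bin (S n) 1)%nat.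
      pose proof (IHn 0%nat). assert (E0 : forall p, bin p 0 = 1%nat) by (destruct p; reflexivity).
      rewrite !E0 in *. lia.
    + change (bin (S (S n)) (S (S k))) with (bin (S n) (S k) + bin (S n) (S (S k)))%nat.
      pose proof (IHn k). pose proof (IHn (S k)).
      change (bin (S n) (S k)) with (bin n k + bin n (S k))%nat in *. nia.
Qed.

Lemma sumC_ext (n : nat) (f g : nat -> C) : (forall k, (k < n)%nat -> f k = g k) -> sumC n f = sumC n g.
Proof.
  induction n; intros H; simpl. reflexivity. rewrite IHn by (intros; apply H; lia). rewrite H by lia. reflexivity.
Qed.

Lemma sumC_plus (n : nat) (f g : nat -> C) : sumC n (fun k => f k + g k) = sumC n f + sumC n g.
Proof. induction n; simpl. ring. rewrite IHn. ring. Qed.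

Lemma sumC_scal (n : nat) (c : C) (f : nat -> C) : sumC n (fun k => c * f k) = c * sumC n f.
Proof. induction n; simpl. ring. rewrite IHn. ring. Qed.

Lemma sumC_first (n : nat) (f : nat -> C) : sumC (S n) f = f O + sumC n (fun k => f (S k)).
Proof.
  induction n. simpl. ring.
  change (sumC (S (S n)) f) with (sumC (S n) f + f (S n)). rewrite IHn. simpl. ring.
Qed.

Definition Bs (n : nat) (f : nat -> C) : C :=
  sumC (S n) (fun k => (-1) ^ k * RtoC (INR (bin n k)) * f k).

Lemma Bs_plus (n : nat) (f g : nat -> C) : Bs n (fun k => f k + g k) = Bs n f + Bs n g.
Proof. unfold Bs. rewrite <- sumC_plus. apply sumC_ext. intros. ring. Qed.

Lemma Bs_scal (n : nat) (c : C) (f : nat -> C) : Bs n (fun k => c * f k) = c * Bs n f.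
Proof. unfold Bs. rewrite <- sumC_scal. apply sumC_ext. intros. ring. Qed.

Lemma Bs_ext (n : nat) (f g : nat -> C) : (forall k, f k = g k) -> Bs n f = Bs n g.
Proof. intros H. unfold Bs. apply sumC_ext. intros. rewrite H. reflexivity. Qed.

Lemma Bs_pascal (n : nat) (f : nat -> C) : Bs (S n) f = Bs n f - Bs n (fun k => f (S k)).
Proof.
  assert (H1 : sumC (S n) (fun k => (-1) ^ k * RtoC (INR (bin n (S k))) * f (S k)) = f O - Bs n f).
  { assert (E : sumC (S (S n)) (fun k => (-1) ^ k * RtoC (INR (bin n k)) * f k)
               = sumC (S n) (fun k => (-1) ^ k * RtoC (INR (bin n k)) * f k)).
    { change (sumC (S (S n)) (fun k => (-1) ^ k * RtoC (INR (bin n k)) * f k))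
        with (sumC (S n) (fun k => (-1) ^ k * RtoC (INR (bin n k)) * f k)
              + (-1) ^ (S n) * RtoC (INR (bin n (S n))) * f (S n)).
      rewrite bin_gt by lia. simpl INR. ring. }
    assert (E2 : Bs n f = f O + Copp 1 * sumC (S n) (fun k => (-1) ^ k * RtoC (INR (bin n (S k))) * f (S k))).
    { unfold Bs. rewrite <- E, sumC_first, <- sumC_scal. 
      replace ((-1) ^ 0 * RtoC (INR (bin n 0)) * f 0%nat) with (f O) by (destruct n; simpl; ring).
      f_equal. apply sumC_ext. intros k _. simpl. ring. }
    rewrite E2. ring. }
  unfold Bs at 1. rewrite sumC_first.
  rewrite (sumC_ext (S n) (fun k => (-1) ^ S k * RtoC (INR (bin (S n) (S k))) * f (S k))
     (fun k => (-1) * ((-1) ^ k * RtoC (INR (bin n k)) * f (S k)) + (-1) * ((-1) ^ k * RtoC (INR (bin n (S k))) * f (S k)))).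
  2:{ intros k _. simpl bin. rewrite plus_INR, RtoC_plus. simpl. ring. }
  rewrite sumC_plus, !sumC_scal, H1.
  change (sumC (S n) (fun k => (-1) ^ k * RtoC (INR (bin n k)) * f (S k))) with (Bs n (fun k => f (S k))).
  replace ((-1) ^ 0 * RtoC (INR (bin (S n) 0)) * f 0%nat) with (f O) by (simpl; ring).
  ring.
Qed.

Definition tt (a b : C) (k : nat) : C := poch b k / poch a k.
Definition uu (a b : C) (k : nat) : C := poch (a - b) k / poch a k.

Lemma poch_nonzero (a : C) (k : nat) : nonpole a -> poch a k <> 0.
Proof. intros Ha. unfold poch. apply prodC_nonzero. intros; apply Ha. Qed.

Lemma poch_first (z : C) (k : nat) : poch z (S k) = z * poch (z + 1) k.
Proof.
  unfold poch. rewrite prodC_first. change (INR 0) with 0%R. rewrite Cplus_0_r. f_equal.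
  apply prodC_ext. intros i _. rewrite RtoC_INR_S. ring.
Qed.

Lemma nonpole_a0 (a : C) : nonpole a -> a <> 0.
Proof. intros Ha E. apply (Ha O). change (INR 0) with 0%R. rewrite E. ring. Qed.

Lemma nonpole_1 (a : C) : nonpole a -> nonpole (a + 1).
Proof. intros Ha m. replace (a + 1 + RtoC (INR m)) with (a + RtoC (INR (S m))) by (rewrite RtoC_INR_S; ring). apply Ha. Qed.

Lemma tt_shift (a b : C) (k : nat) : nonpole a -> tt a b (S k) = b / a * tt (a + 1) (b + 1) k.
Proof.
  intros Ha. unfold tt. rewrite !poch_first.
  pose proof (nonpole_a0 a Ha). pose proof (poch_nonzero (a + 1) k (nonpole_1 a Ha)).
  field. split; auto.
Qed.

Lemma tt_0 (a b : C) : tt a b 0 = 1.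
Proof. unfold tt, poch. simpl. field; apply C1_nz. Qed.

Lemma uu_0 (a b : C) : uu a b 0 = 1.
Proof. unfold uu, poch. simpl. field; apply C1_nz. Qed.

Lemma uu_rel (a b : C) (k : nat) : nonpole a -> uu a b k - b / a * uu (a + 1) (b + 1) k = uu a b (S k).
Proof.
  intros Ha. unfold uu. replace (a + 1 - (b + 1)) with (a - b) by ring.
  assert (E : poch (a + 1) k = poch a k * (a + RtoC (INR k)) / a).
  { pose proof (poch_first a k). change (poch a (S k)) with (poch a k * (a + RtoC (INR k))) in H.
    rewrite H. field. apply nonpole_a0; auto. }
  rewrite E. change (poch (a - b) (S k)) with (poch (a - b) k * (a - b + RtoC (INR k))).
  change (poch a (S k)) with (poch a k * (a + RtoC (INR k))).
  pose proof (nonpole_a0 a Ha). pose proof (poch_nonzero a k Ha). pose proof (Ha k).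
  field. repeat split; auto.
Qed.

Lemma U_closed (n : nat) : forall a b, nonpole a -> Bs n (tt a b) = uu a b n.
Proof.
  induction n; intros a b Ha.
  - unfold Bs. simpl. rewrite tt_0, uu_0. ring.
  - rewrite Bs_pascal. rewrite (Bs_ext n (fun k => tt a b (S k)) (fun k => b / a * tt (a + 1) (b + 1) k)) by (intros; apply tt_shift; auto).
    rewrite Bs_scal, IHn, IHn by (auto using nonpole_1).
    apply uu_rel; auto.
Qed.

Definition SS (a b : C) (n : nat) : C := Bs n (fun k => tt a b k * harm k).

Lemma harm_S (k : nat) : harm (S k) = harm k + / RtoC (INR (S k)).
Proof. reflexivity. Qed.

Lemma W_lemma (a b : C) (n : nat) :
  Bs n (fun k => tt a b (S k) / RtoC (INR (S k))) = (1 - Bs (S n) (tt a b)) / RtoC (INR (S n)).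
Proof.
  assert (HS : forall p, RtoC (INR (S p)) <> 0).
  { intros p E. apply RtoC_inj in E. apply (not_0_INR (S p)); auto. }
  assert (E1 : Bs n (fun k => tt a b (S k) / RtoC (INR (S k))) =
      / RtoC (INR (S n)) * sumC (S n) (fun k => (-1) ^ k * RtoC (INR (bin (S n) (S k))) * tt a b (S k))).
  { unfold Bs. rewrite <- sumC_scal. apply sumC_ext. intros k _.
    pose proof (bin_absorb n k) as Hab.
    apply (f_equal INR) in Hab. rewrite !mult_INR in Hab. apply (f_equal RtoC) in Hab. rewrite !RtoC_mult in Hab.
    assert (E : RtoC (INR (bin n k)) = RtoC (INR (S k)) * RtoC (INR (bin (S n) (S k))) / RtoC (INR (S n)))
      by (rewrite Hab; field; apply HS).
    rewrite E. field. split; apply HS. }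
  rewrite E1. unfold Bs. rewrite (sumC_first (S n) (fun k => (-1)^k * RtoC (INR (bin (S n) k)) * tt a b k)).
  rewrite (sumC_ext (S n) (fun k => (-1)^(S k) * RtoC (INR (bin (S n) (S k))) * tt a b (S k)) (fun k => Copp 1 * ((-1) ^ k * RtoC (INR (bin (S n) (S k))) * tt a b (S k))))
    by (intros; simpl; ring).
  rewrite sumC_scal. rewrite tt_0. simpl Cpow. change (bin (S n) 0) with 1%nat. simpl INR.
  field. apply HS.
Qed.

Lemma SS_rec (a b : C) (n : nat) : nonpole a ->
  SS a b (S n) = SS a b n - b / a * SS (a + 1) (b + 1) n + (uu a b (S n) - 1) / RtoC (INR (S n)).
Proof.
  intros Ha. unfold SS. rewrite Bs_pascal.
  rewrite (Bs_ext n (fun k => tt a b (S k) * harm (S k))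
      (fun k => b / a * (tt (a + 1) (b + 1) k * harm k) + tt a b (S k) / RtoC (INR (S k)))).
  2:{ intros k. rewrite harm_S. transitivity (tt a b (S k) * harm k + tt a b (S k) / RtoC (INR (S k))). unfold Cdiv; ring. f_equal. rewrite tt_shift by auto. ring. }
  rewrite Bs_plus, Bs_scal, W_lemma, U_closed by auto. unfold Cdiv. ring.
Qed.

Definition TT (v : nat -> C) (n : nat) : C := sumC n (fun k => (v n - v k) / RtoC (INR (n - k))).

Lemma TT_rec (v : nat -> C) (n : nat) :
  TT v (S n) = (v (S n) - v O) / RtoC (INR (S n)) + TT (fun k => v (S k)) n.
Proof. unfold TT. rewrite sumC_first. reflexivity. Qed.

Lemma TT_ext (v w : nat -> C) (n : nat) : (forall k, v k = w k) -> TT v n = TT w n.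
Proof. intros H. unfold TT. apply sumC_ext. intros. rewrite !H. reflexivity. Qed.

Lemma TT_lin (v w : nat -> C) (c : C) (n : nat) : TT v n - c * TT w n = TT (fun k => v k - c * w k) n.
Proof.
  unfold TT. rewrite <- sumC_scal.
  replace (sumC n (fun k : nat => (v n - v k) / RtoC (INR (n - k))) - sumC n (fun k : nat => c * ((w n - w k) / RtoC (INR (n - k)))))
    with (sumC n (fun k : nat => (v n - v k) / RtoC (INR (n - k))) + Copp 1 * sumC n (fun k : nat => c * ((w n - w k) / RtoC (INR (n - k))))) by ring.
  rewrite <- sumC_scal, <- sumC_plus. apply sumC_ext. intros. unfold Cdiv. ring.
Qed.

Lemma SS_TT (n : nat) : forall a b, nonpole a -> SS a b n = TT (uu a b) n.
Proof.
  induction n; intros a b Ha.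
  - unfold SS, Bs, TT. simpl. unfold harm. simpl. ring.
  - rewrite SS_rec by auto. rewrite IHn, IHn by auto using nonpole_1.
    rewrite TT_lin. rewrite TT_rec.
    rewrite (TT_ext _ (fun k => uu a b (S k))) by (intros; apply uu_rel; auto).
    rewrite uu_0. ring.
Qed.

Definition RR (v : nat -> C) (n : nat) : C :=
  harm n * (v n - v O) + sumC n (fun k => harm (n - 1 - k) * (v k - v (S k))).

Lemma RR_TT (n : nat) : forall v, RR v n = TT v n.
Proof.
  induction n; intros v.
  - unfold RR, TT, harm. simpl. ring.
  - rewrite TT_rec, <- IHn. unfold RR. rewrite sumC_first.
    rewrite (sumC_ext n (fun k => harm (S n - 1 - S k) * (v (S k) - v (S (S k))))
                        (fun k => harm (n - 1 - k) * (v (S k) - v (S (S k))))).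
    2:{ intros k _. f_equal. f_equal. lia. }
    replace (S n - 1 - 0)%nat with n by lia.
    rewrite harm_S. field.
    intro E. apply RtoC_inj in E. apply (not_0_INR (S n)); auto.
Qed.

Open Scope C_scope.

Lemma negint_nonpole (x : C) : ~ is_negint x -> nonpole (x + 1).
Proof.
  intros H m E. apply H. exists m.
  replace x with (x + 1 + RtoC (INR m) - (RtoC (INR m) + 1)) by ring.
  rewrite E, RtoC_INR_S. ring.
Qed.

Lemma nonpole_s (s : C) : ~ is_negint s -> s <> 0 -> nonpole s.
Proof.
  intros H H0 m E. destruct m.
  - apply H0. change (INR 0) with 0%R in E. rewrite <- E. ring.
  - apply H. exists m. replace s with (s + RtoC (INR (S m)) - RtoC (INR (S m))) by ring.
    rewrite E. ring.
Qed.

Lemma Cinv_inv_gen (x : C) : / / x = x.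
Proof. destruct (Ceq_dec x 0) as [->|H]. rewrite !Cinv_0. reflexivity. field. auto. Qed.

Theorem theorem13 (n : nat) (r s : C)
  (hr : ~ is_negint r) (hs : ~ is_negint s) (hs0 : s <> 0)
  (hrs : ~ is_negint (r - s)) :
  sumC (S n) (fun k =>
      (-1) ^ k * RtoC (nbinom n k) / Cbinom (RtoC (INR k) + r) s * harm k)
  = harm n * (s / (r - s + 1) * / Cbinom (RtoC (INR n) + r) (r - s + 1)
              - / Cbinom r s)
    + s * sumC n (fun k =>
        harm (n - 1 - k) / ((RtoC (INR k) + s) * Cbinom (r + RtoC (INR k) + 1) (r - s + 1))).
Proof.
  pose proof (negint_nonpole r hr) as Ha.
  pose proof (negint_nonpole (r - s) hrs) as Hb.
  pose proof (nonpole_s s hs hs0) as Hs.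
  set (a := r + 1) in *. set (b := r - s + 1).
  assert (Hb' : nonpole b) by exact Hb.
  assert (Hb0 : b <> 0) by (apply nonpole_a0; auto).
  set (G1 := CGamma a). set (G2 := CGamma b). set (G0 := CGamma s).
  set (iG1 := / G1).
  set (c := s * G0 * G2 * iG1).
  assert (Gs1 : CGamma (s + 1) = s * G0) by (apply Gamma_succ; auto).
  assert (Gb1 : CGamma (b + 1) = b * G2) by (apply Gamma_succ; auto).
  assert (ab : a - b = s) by (unfold a, b; ring).
  assert (EL : forall k, (k <= n)%nat ->
     (-1) ^ k * RtoC (nbinom n k) / Cbinom (RtoC (INR k) + r) s * harm k
     = c * ((-1) ^ k * RtoC (INR (bin n k)) * (tt a b k * harm k))).
  { intros k Hk. rewrite nbinom_bin by exact Hk. unfold Cbinom.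
    replace (RtoC (INR k) + r + 1) with (a + RtoC (INR k)) by (unfold a; ring).
    replace (RtoC (INR k) + r - s + 1) with (b + RtoC (INR k)) by (unfold b; ring).
    rewrite Gs1, !Gamma_shift by auto. fold G1 G2.
    unfold Cdiv. rewrite Cinv_mult_gen, Cinv_inv_gen, Cinv_mult_gen.
    fold iG1. unfold c, tt. pose proof (poch_nonzero a k Ha).
    field. auto. }
  assert (E1 : s / b * / Cbinom (RtoC (INR n) + r) b = c * uu a b n).
  { unfold Cbinom.
    replace (RtoC (INR n) + r + 1) with (a + RtoC (INR n)) by (unfold a; ring).
    replace (RtoC (INR n) + r - b + 1) with (s + RtoC (INR n)) by (unfold b; ring).
    rewrite Gb1, !Gamma_shift by auto. fold G1 G0.
    unfold Cdiv. rewrite Cinv_mult_gen, Cinv_inv_gen, Cinv_mult_gen.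
    fold iG1. unfold c, uu. rewrite ab. pose proof (poch_nonzero a n Ha).
    field. auto. }
  assert (E2 : / Cbinom r s = c).
  { unfold Cbinom. fold a.
    replace (r - s + 1) with b by reflexivity.
    rewrite Gs1. fold G1 G2. unfold Cdiv. rewrite Cinv_mult_gen, Cinv_inv_gen.
    fold iG1. unfold c. ring. }
  assert (E3 : forall k, s * (harm (n - 1 - k) / ((RtoC (INR k) + s) * Cbinom (r + RtoC (INR k) + 1) b))
       = c * (harm (n - 1 - k) * (uu a b k - uu a b (S k)))).
  { intros k. unfold Cbinom.
    replace (r + RtoC (INR k) + 1 + 1) with (a + RtoC (INR (S k))) by (unfold a; rewrite RtoC_INR_S; ring).
    replace (r + RtoC (INR k) + 1 - b + 1) with (s + RtoC (INR (S k))) by (unfold b; rewrite RtoC_INR_S; ring).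
    rewrite Gb1, !Gamma_shift by auto. fold G1 G0.
    unfold Cdiv. rewrite Cinv_mult_gen, Cinv_mult_gen, Cinv_inv_gen, Cinv_mult_gen.
    fold iG1. unfold c, uu. rewrite ab.
    change (poch s (S k)) with (poch s k * (s + RtoC (INR k))).
    change (poch a (S k)) with (poch a k * (a + RtoC (INR k))).
    pose proof (poch_nonzero a k Ha). pose proof (Ha k). pose proof (Hs k).
    assert (RtoC (INR k) + s <> 0) by (intro E; apply H1; rewrite <- E; ring).
    replace b with (a - s) by (rewrite <- ab; ring). field. repeat split; auto. }
  rewrite (sumC_ext (S n) _ (fun k => c * ((-1) ^ k * RtoC (INR (bin n k)) * (tt a b k * harm k))))
    by (intros k Hk; apply EL; lia).
  rewrite sumC_scal. rewrite E1, E2.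
  rewrite <- (sumC_scal n s).
  rewrite (sumC_ext n (fun k => s * (harm (n - 1 - k) / ((RtoC (INR k) + s) * Cbinom (r + RtoC (INR k) + 1) b))) (fun k => c * (harm (n - 1 - k) * (uu a b k - uu a b (S k))))) by (intros k _; apply E3).
  rewrite sumC_scal.
  change (sumC (S n) (fun k => (-1) ^ k * RtoC (INR (bin n k)) * (tt a b k * harm k))) with (SS a b n).
  rewrite SS_TT by auto. rewrite <- RR_TT. unfold RR. rewrite uu_0. ring.
Qed.
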